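(* Let $P>0$, $\Delta>0$, $T\in\mathbb{N}$, and $H_1,H_2\ge 0$. Define the quantizer $q_r(x)=\lfloor x/\Delta\rfloor\Delta$ for $x\le T\Delta$ and $q_r(x)=T\Delta$ for $x>T\Delta$, and set $a_i=q_r(H_i)$. Suppose $a_1\ge a_2$. Let $$\alpha_{q_r}=\frac{2a_2}{\sqrt{(a_1+a_2)^2+4a_1a_2^2P}+(a_1+a_2)}\ \text{ if } a_1>0,\ a_2>0,\qquad \alpha_{q_r}=0 \text{ otherwise},$$ and $$r_{1,q_r}=\log_2(1+P\alpha_{q_r}a_1),\qquad r_{2,q_r}=\log_2\Big(1+\frac{P a_2(1-\alpha_{q_r})}{P a_2\alpha_{q_r}+1}\Big).$$ Then the rates $r_{1,q_r}$ and $r_{2,q_r}$ are achievable, i.e. $$r_{2,q_r}\le \log_2\Big(1+\frac{PH_2(1-\alpha_{q_r})}{PH_2\alpha_{q_r}+1}\Big),\quad r_{2,q_r}\le \log_2\Big(1+\frac{PH_1(1-\alpha_{q_r})}{PH_1\alpha_{q_r}+1}\Big),\quad r_{1,q_r}\le\log_2(1+P\alpha_{q_r}H_1).$$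
   Context: Two-user downlink NOMA with total power $P$, unit noise variance, true channel gains $H_1,H_2$. The base station gives power fraction $\alpha$ to $s_1$ (Receiver 1, treated as the stronger receiver since $q_r(H_1)\ge q_r(H_2)$) and $1-\alpha$ to $s_2$. Achievability means that each transmitted rate is at most the corresponding capacity under successive interference cancellation: Receiver 2 decodes $s_2$ treating $s_1$ as noise (first bound); Receiver 1 first decodes $s_2$ treating $s_1$ as noise (second bound), removes it, and then decodes $s_1$ interference-free (third bound). *)

(* Defs.v *)
From Stdlib Require Import Reals.
Open Scope R_scope.

Definition log2 (x : R) : R := ln x / ln 2.

(* floor of a real: Int_part r = up r - 1 is the integer floor *)
Definition floorR (x : R) : R := IZR (Int_part x).

Definition q_r (Delta : R) (T : nat) (x : R) : R :=
  if Rle_dec x (INR T * Delta) then floorR (x / Delta) * Delta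
  else INR T * Delta.

Definition alpha_q (P a1 a2 : R) : R :=
  if Rlt_dec 0 a1 then
    if Rlt_dec 0 a2 then
      2 * a2 / (sqrt ((a1 + a2)^2 + 4 * a1 * a2^2 * P) + (a1 + a2))
    else 0
  else 0.

(* Main.v *)
Require Import Defs.
From Stdlib Require Import Reals Lra Psatz.
Open Scope R_scope.

Lemma Rdiv_le_0_compat (a b : R) : 0 <= a -> 0 < b -> 0 <= a / b.
Proof. intros; unfold Rdiv; apply Rmult_le_pos; [lra|left; apply Rinv_0_lt_compat; lra]. Qed.

Lemma q_r_bounds (Delta : R) (T : nat) (x : R) :
  0 < Delta -> 0 <= x -> 0 <= q_r Delta T x <= x.
Proof.
  intros hD hx. unfold q_r, floorR.
  destruct (Rle_dec x (INR T * Delta)) as [h|h].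
  - destruct (base_Int_part (x / Delta)) as [b1 b2].
    assert (0 <= x / Delta) by (apply Rdiv_le_0_compat; lra).
    assert (hz : (Int_part (x / Delta) >= 0)%Z).
    { assert (IZR (Int_part (x / Delta)) > -1) by lra.
      assert (-1 < Int_part (x / Delta))%Z by (apply lt_IZR; lra). lia. }
    assert (0 <= IZR (Int_part (x / Delta))) by (apply IZR_le; lia).
    split; [nra|].
    assert (IZR (Int_part (x / Delta)) * Delta <= x / Delta * Delta) by nra.
    replace (x / Delta * Delta) with x in H1 by (field; lra). lra.
  - pose proof (pos_INR T). split; nra.
Qed.

Lemma alpha_bounds (P a1 a2 : R) : 0 <= a2 <= a1 -> 0 <= alpha_q P a1 a2 <= 1.
Proof.
  intros h. unfold alpha_q.
  destruct (Rlt_dec 0 a1); [|lra].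
  destruct (Rlt_dec 0 a2); [|lra].
  pose proof (sqrt_pos ((a1 + a2)^2 + 4 * a1 * a2^2 * P)).
  set (s := sqrt _) in *.
  split.
  - apply Rdiv_le_0_compat; lra.
  - apply (Rmult_le_reg_r (s + (a1 + a2))); [lra|].
    unfold Rdiv. rewrite Rmult_assoc, Rinv_l by lra. lra.
Qed.

Lemma log2_le (x y : R) : 0 < x -> x <= y -> log2 x <= log2 y.
Proof.
  intros hx hxy. unfold log2, Rdiv.
  apply Rmult_le_compat_r.
  - left. apply Rinv_0_lt_compat. rewrite <- ln_1. apply ln_increasing; lra.
  - destruct hxy as [h|h]; [left; apply ln_increasing; lra | right; rewrite h; reflexivity].
Qed.

Lemma rate_mono (P a x y : R) : 0 < P -> 0 <= a <= 1 -> 0 <= x <= y ->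
  log2 (1 + P * x * (1 - a) / (P * x * a + 1)) <=
  log2 (1 + P * y * (1 - a) / (P * y * a + 1)).
Proof.
  intros hP ha hxy.
  assert (0 <= P * x) by nra. assert (0 <= P * y) by nra.
  assert (0 <= P * x * a) by nra. assert (0 <= P * y * a) by nra.
  assert (hu : 0 < P * x * a + 1) by lra.
  assert (hv : 0 < P * y * a + 1) by lra.
  apply log2_le.
  - assert (0 <= P * x * (1 - a) / (P * x * a + 1)).
    { apply Rdiv_le_0_compat; nra. } lra.
  - apply Rplus_le_compat_l.
    unfold Rdiv.
    apply (Rmult_le_reg_r ((P * x * a + 1) * (P * y * a + 1))); [nra|].
    replace (P * x * (1 - a) * / (P * x * a + 1) * ((P * x * a + 1) * (P * y * a + 1)))
      with (P * x * (1 - a) * (P * y * a + 1)) by (field; lra).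
    replace (P * y * (1 - a) * / (P * y * a + 1) * ((P * x * a + 1) * (P * y * a + 1)))
      with (P * y * (1 - a) * (P * x * a + 1)) by (field; lra).
    assert (0 <= (1 - a) * (y - x)) by (apply Rmult_le_pos; lra).
    assert (0 <= P * ((1 - a) * (y - x))) by (apply Rmult_le_pos; lra).
    nra.
Qed.

Theorem lemma1 (P Delta : R) (T : nat) (H1 H2 : R)
  (hP : 0 < P) (hD : 0 < Delta) (hH1 : 0 <= H1) (hH2 : 0 <= H2)
  (hord : q_r Delta T H1 >= q_r Delta T H2) :
  let a1 := q_r Delta T H1 in
  let a2 := q_r Delta T H2 in
  let al := alpha_q P a1 a2 in
  let r1 := log2 (1 + P * al * a1) in
  let r2 := log2 (1 + P * a2 * (1 - al) / (P * a2 * al + 1)) in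
  r2 <= log2 (1 + P * H2 * (1 - al) / (P * H2 * al + 1)) /\
  r2 <= log2 (1 + P * H1 * (1 - al) / (P * H1 * al + 1)) /\
  r1 <= log2 (1 + P * al * H1).
Proof.
  intros a1 a2 al r1 r2.
  pose proof (q_r_bounds Delta T H1 hD hH1) as b1.
  pose proof (q_r_bounds Delta T H2 hD hH2) as b2.
  fold a1 in b1. fold a2 in b2. fold a1 a2 in hord.
  assert (ha : 0 <= al <= 1) by (apply alpha_bounds; lra).
  split; [|split].
  - apply rate_mono; lra.
  - apply rate_mono; lra.
  - assert (0 <= P * al) by (apply Rmult_le_pos; lra).
    assert (0 <= P * al * a1) by (apply Rmult_le_pos; lra).
    assert (P * al * a1 <= P * al * H1) by (apply Rmult_le_compat_l; lra).
    apply log2_le; lra.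
Qed.
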